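(* Let $k_1=(1,0)$, $k_2=(-\tfrac12,\tfrac{\sqrt3}{2})$, $k_3=(-\tfrac12,-\tfrac{\sqrt3}{2})$, let $\Lambda=\{x\in\mathbb R^2: k_1\cdot x\in2\pi\mathbb Z,\ k_2\cdot x\in2\pi\mathbb Z\}$, let $\phi(x)=\sum_{j=1}^3\cos(k_j\cdot x)$, and for $\varepsilon\in\mathbb R$ let $f_\varepsilon=Z_\varepsilon^{-1}e^{\varepsilon\phi}$ with $Z_\varepsilon=\langle e^{\varepsilon\phi}\rangle$, a probability density on the torus $\mathbb R^2/\Lambda$ with respect to normalized Haar measure. Then, as $\varepsilon\to0$, \[ \mathcal I[f_\varepsilon]=\tfrac32\varepsilon^2+\tfrac34\varepsilon^3+O(\varepsilon^4),\quad \mathcal Q[f_\varepsilon]=\tfrac32\varepsilon^2+\tfrac38\varepsilon^3+O(\varepsilon^4),\quad \mathcal D[f_\varepsilon]=\tfrac32\varepsilon^2-\tfrac3{16}\varepsilon^3+O(\varepsilon^4). \] Consequently \[ \mathcal I[f_\varepsilon]\mathcal D[f_\varepsilon]-\mathcal Q[f_\varepsilon]^2=-\tfrac9{32}\varepsilon^5+O(\varepsilon^6),\qquad \frac{\mathcal I[f_\varepsilon]\mathcal D[f_\varepsilon]}{\mathcal Q[f_\varepsilon]^2}=1-\tfrac18\varepsilon+O(\varepsilon^2), \] so $\mathcal I[f_\varepsilon]\mathcal D[f_\varepsilon]-\mathcal Q[f_\varepsilon]^2<0$ for all sufficiently small $\varepsilon>0$.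
   Context: $\langle G\rangle$ denotes the normalized Haar average of a $\Lambda$-periodic function $G$ (average over a fundamental cell). For a positive smooth density $f=e^u$ on the torus (normalized so $\langle f\rangle=1$), set $\mathsf H_f=-\nabla^2u$ and define $\mathcal I[f]=\langle\operatorname{tr}(\mathsf H_f)f\rangle$, $\mathcal Q[f]=\langle\operatorname{tr}(\mathsf H_f^2)f\rangle$, $\mathcal D[f]=\langle(|\nabla\mathsf H_f|^2+2\operatorname{tr}(\mathsf H_f^3))f\rangle$, where $|\nabla\mathsf H_f|^2=\sum_{i,j,k}(\partial_k(\mathsf H_f)_{ij})^2$. *)

(* Defs.v *)
From Stdlib Require Import Reals.
From Coquelicot Require Import Coquelicot.
Open Scope R_scope.

Definition dot (k x : R * R) : R := fst k * fst x + snd k * snd x.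

Definition k1 : R * R := (1, 0).
Definition k2 : R * R := (- / 2, sqrt 3 / 2).
Definition k3 : R * R := (- / 2, - (sqrt 3 / 2)).

Definition in_Lambda (x : R * R) : Prop :=
  (exists m : Z, dot k1 x = 2 * PI * IZR m) /\
  (exists n : Z, dot k2 x = 2 * PI * IZR n).

(* A Z-basis of Lambda (dual to k1,k2: k_i . a_j = 2 pi delta_ij). *)
Definition a1 : R * R := (2 * PI, 2 * PI / sqrt 3).
Definition a2 : R * R := (0, 4 * PI / sqrt 3).

(* Normalized Haar average of a Lambda-periodic G: average over the
   fundamental cell { s a1 + t a2 | s,t in [0,1] }; in the coordinates
   (s,t) the normalized Lebesgue measure of the cell is ds dt. *)
Definition avg (G : R -> R -> R) : R :=
  RInt (fun s => RInt (fun t =>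
      G (s * fst a1 + t * fst a2) (s * snd a1 + t * snd a2)) 0 1) 0 1.

Definition pd (i : nat) (G : R -> R -> R) : R -> R -> R :=
  match i with
  | O => fun x y => Derive (fun t => G t y) x
  | _ => fun x y => Derive (fun t => G x t) y
  end.

Definition sum2 (F : nat -> R) : R := F 0%nat + F 1%nat.

Definition Hf (f : R -> R -> R) (i j : nat) : R -> R -> R :=
  fun x y => - pd i (pd j (fun a b => ln (f a b))) x y.

Definition trH (f : R -> R -> R) x y : R := sum2 (fun i => Hf f i i x y).
Definition trH2 (f : R -> R -> R) x y : R :=
  sum2 (fun i => sum2 (fun j => Hf f i j x y * Hf f j i x y)).
Definition trH3 (f : R -> R -> R) x y : R :=
  sum2 (fun i => sum2 (fun j => sum2 (fun k =>
     Hf f i j x y * Hf f j k x y * Hf f k i x y))).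
Definition gradH2 (f : R -> R -> R) x y : R :=
  sum2 (fun i => sum2 (fun j => sum2 (fun k =>
     (pd k (Hf f i j) x y) ^ 2))).

Definition Ifun (f : R -> R -> R) : R := avg (fun x y => trH f x y * f x y).
Definition Qfun (f : R -> R -> R) : R := avg (fun x y => trH2 f x y * f x y).
Definition Dfun (f : R -> R -> R) : R :=
  avg (fun x y => (gradH2 f x y + 2 * trH3 f x y) * f x y).

Definition phi (x y : R) : R :=
  cos (dot k1 (x, y)) + cos (dot k2 (x, y)) + cos (dot k3 (x, y)).

Definition Zeps (eps : R) : R := avg (fun x y => exp (eps * phi x y)).
Definition feps (eps : R) : R -> R -> R :=
  fun x y => exp (eps * phi x y) / Zeps eps.

Definition bigO0 (g : R -> R) (n : nat) : Prop :=
  exists C delta : R, 0 < delta /\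
    forall eps, 0 < Rabs eps < delta -> Rabs (g eps) <= C * Rabs eps ^ n.

(* Main.v *)
Require Import Defs.
From Stdlib Require Import Reals.
From Coquelicot Require Import Coquelicot.
Open Scope R_scope.
From Stdlib Require Import Reals Lra Psatz List Nsatz.
Import ListNotations.
From Coquelicot Require Import Coquelicot.
Open Scope R_scope.

Lemma lip1 (f df : R -> R) K a b :
  (forall x, is_derive f x (df x)) ->
  (forall x, Rmin a b <= x <= Rmax a b -> Rabs (df x) <= K) ->
  Rabs (f b - f a) <= K * Rabs (b - a).
Proof.
  intros Hd Hb.
  destruct (MVT_gen f a b df) as [c [Hc Hfc]].
  - intros x _; apply Hd.
  - intros x _. apply continuity_pt_filterlim.
    apply (ex_derive_continuous (V:=R_NormedModule) f x). eexists; apply Hd.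
  - rewrite Hfc, Rabs_mult. apply Rmult_le_compat_r. apply Rabs_pos. now apply Hb.
Qed.

Definition Lip2 (h : R -> R -> R) :=
  (exists L, forall s t s' t', Rabs (h s t - h s' t') <= L * (Rabs (s - s') + Rabs (t - t'))) /\
  (exists B, forall s t, Rabs (h s t) <= B).

Lemma Lip2_const c : Lip2 (fun _ _ => c).
Proof.
  split. exists 0. intros. rewrite Rminus_diag, Rabs_R0. lra.
  exists (Rabs c). intros; lra.
Qed.

Lemma Lip2_plus f g : Lip2 f -> Lip2 g -> Lip2 (fun s t => f s t + g s t).
Proof.
  intros [[Lf Hf] [Bf Hbf]] [[Lg Hg] [Bg Hbg]]. split.
  - exists (Lf + Lg). intros s t s' t'.
    specialize (Hf s t s' t'); specialize (Hg s t s' t').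
    replace (f s t + g s t - (f s' t' + g s' t')) with ((f s t - f s' t') + (g s t - g s' t')) by ring.
    eapply Rle_trans. apply Rabs_triang. lra.
  - exists (Bf + Bg). intros s t. eapply Rle_trans. apply Rabs_triang.
    specialize (Hbf s t); specialize (Hbg s t). lra.
Qed.

Lemma Lip2_mult f g : Lip2 f -> Lip2 g -> Lip2 (fun s t => f s t * g s t).
Proof.
  intros [[Lf Hf] [Bf Hbf]] [[Lg Hg] [Bg Hbg]].
  assert (0 <= Bf) by (eapply Rle_trans; [apply Rabs_pos| apply (Hbf 0 0)]).
  assert (0 <= Bg) by (eapply Rle_trans; [apply Rabs_pos| apply (Hbg 0 0)]).
  split.
  - exists (Bf * Lg + Bg * Lf). intros s t s' t'.
    specialize (Hf s t s' t'); specialize (Hg s t s' t').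
    replace (f s t * g s t - f s' t' * g s' t') with (f s t * (g s t - g s' t') + g s' t' * (f s t - f s' t')) by ring.
    eapply Rle_trans. apply Rabs_triang. rewrite !Rabs_mult.
    set (D := Rabs (s - s') + Rabs (t - t')).
    assert (Rabs (f s t) * Rabs (g s t - g s' t') <= Bf * (Lg * D)).
    { apply Rmult_le_compat; auto using Rabs_pos. }
    assert (Rabs (g s' t') * Rabs (f s t - f s' t') <= Bg * (Lf * D)).
    { apply Rmult_le_compat; auto using Rabs_pos. }
    lra.
  - exists (Bf * Bg). intros s t. rewrite Rabs_mult.
    apply Rmult_le_compat; auto using Rabs_pos.
Qed.

Lemma Lip2_pow f n : Lip2 f -> Lip2 (fun s t => f s t ^ n).
Proof.
  intros H. induction n as [|n IH]. exact (Lip2_const 1).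
  simpl. apply (Lip2_mult f (fun s t => f s t ^ n)); auto.
Qed.

Lemma Lip2_exp f : Lip2 f -> Lip2 (fun s t => exp (f s t)).
Proof.
  intros [[L Hf] [B Hb]]. split.
  - exists (exp B * L). intros s t s' t'.
    rewrite Rmult_assoc.
    eapply Rle_trans.
    + apply (lip1 exp exp (exp B) (f s' t') (f s t)).
      * intros x. apply is_derive_exp.
      * intros x Hx. rewrite Rabs_pos_eq by (left; apply exp_pos).
        destruct (Rle_lt_or_eq_dec x B) as [h|h].
        { generalize (Hb s t) (Hb s' t'). unfold Rmin, Rmax in Hx.
          destruct (Rle_dec (f s' t') (f s t)); intros h1 h2;
          apply Rabs_le_between in h1; apply Rabs_le_between in h2; lra. }
        left; now apply exp_increasing. right; now rewrite h.
    + apply Rmult_le_compat_l. left; apply exp_pos. apply Hf.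
  - exists (exp B). intros s t. rewrite Rabs_pos_eq by (left; apply exp_pos).
    specialize (Hb s t). apply Rabs_le_between in Hb.
    destruct (Rle_lt_or_eq_dec (f s t) B) as [h|h]. lra.
    left; now apply exp_increasing. right; now rewrite h.
Qed.

Lemma lip_trig (g : R -> R) dg c x y :
  (forall x, is_derive g x (dg x)) -> (forall x, Rabs (dg x) <= 1) ->
  0 <= c -> Rabs (g (c * x) - g (c * y)) <= c * Rabs (x - y).
Proof.
  intros H1 H2 Hc.
  eapply Rle_trans. apply (lip1 g dg 1 (c*y) (c*x)); auto.
  replace (c * x - c * y) with (c * (x - y)) by ring. rewrite Rabs_mult, Rabs_pos_eq; lra.
Qed.

Lemma Lip2_trig_s (g : R -> R) dg c : (forall x, is_derive g x (dg x)) -> (forall x, Rabs (dg x) <= 1) ->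
  (forall x, Rabs (g x) <= 1) -> 0 <= c -> Lip2 (fun s t => g (c * s)).
Proof.
  intros H1 H2 H3 Hc. split.
  - exists c. intros. eapply Rle_trans. apply (lip_trig g dg); auto.
    apply Rmult_le_compat_l; auto. generalize (Rabs_pos (t - t')); lra.
  - exists 1. auto.
Qed.

Lemma Lip2_trig_t (g : R -> R) dg c : (forall x, is_derive g x (dg x)) -> (forall x, Rabs (dg x) <= 1) ->
  (forall x, Rabs (g x) <= 1) -> 0 <= c -> Lip2 (fun s t => g (c * t)).
Proof.
  intros H1 H2 H3 Hc. split.
  - exists c. intros. eapply Rle_trans. apply (lip_trig g dg); auto.
    apply Rmult_le_compat_l; auto. generalize (Rabs_pos (s - s')); lra.
  - exists 1. auto.
Qed.

Lemma cos_d x : is_derive cos x (- sin x). Proof. auto_derive; auto; ring. Qed.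
Lemma sin_d x : is_derive sin x (cos x). Proof. auto_derive; auto; ring. Qed.
Lemma abs_cos_le x : Rabs (cos x) <= 1. Proof. apply Rabs_le; apply COS_bound. Qed.
Lemma abs_sin_le x : Rabs (sin x) <= 1. Proof. apply Rabs_le; apply SIN_bound. Qed.
Lemma abs_msin_le x : Rabs (- sin x) <= 1. Proof. rewrite Rabs_Ropp; apply abs_sin_le. Qed.

Lemma twoPI_pos : 0 <= 2 * PI. Proof. generalize PI_RGT_0; lra. Qed.

Definition cs (s : R) := cos (2 * PI * s).
Definition sn (s : R) := sin (2 * PI * s).

Lemma Lip2_cs_s : Lip2 (fun s t => cs s).
Proof. exact (Lip2_trig_s cos _ _ cos_d abs_msin_le abs_cos_le twoPI_pos). Qed.
Lemma Lip2_sn_s : Lip2 (fun s t => sn s).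
Proof. exact (Lip2_trig_s sin _ _ sin_d abs_cos_le abs_sin_le twoPI_pos). Qed.
Lemma Lip2_cs_t : Lip2 (fun s t => cs t).
Proof. exact (Lip2_trig_t cos _ _ cos_d abs_msin_le abs_cos_le twoPI_pos). Qed.
Lemma Lip2_sn_t : Lip2 (fun s t => sn t).
Proof. exact (Lip2_trig_t sin _ _ sin_d abs_cos_le abs_sin_le twoPI_pos). Qed.
Lemma RInt_plusR (f g : R -> R) a b : ex_RInt f a b -> ex_RInt g a b ->
  RInt (fun x => f x + g x) a b = RInt f a b + RInt g a b.
Proof. intros; exact (RInt_plus f g a b H H0). Qed.
Lemma RInt_minusR (f g : R -> R) a b : ex_RInt f a b -> ex_RInt g a b ->
  RInt (fun x => f x - g x) a b = RInt f a b - RInt g a b.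
Proof. intros; exact (RInt_minus f g a b H H0). Qed.
Lemma RInt_scalR (f : R -> R) a b l : ex_RInt f a b ->
  RInt (fun x => l * f x) a b = l * RInt f a b.
Proof. intros; exact (RInt_scal f a b l H). Qed.

Lemma lip_continuous (g : R -> R) L x : (forall y, Rabs (g y - g x) <= L * Rabs (y - x)) ->
  continuous g x.
Proof.
  intros H. apply continuity_pt_filterlim, continuity_pt_locally. intros eps.
  assert (Hp : 0 < eps / (Rabs L + 1)).
  { apply Rdiv_lt_0_compat. apply cond_pos. generalize (Rabs_pos L); lra. }
  exists (mkposreal _ Hp). intros u Hu. change (Rabs (u - x) < eps / (Rabs L + 1)) in Hu.
  eapply Rle_lt_trans. apply H.
  apply Rle_lt_trans with (Rabs L * Rabs (u - x)).
  apply Rmult_le_compat_r. apply Rabs_pos. apply Rle_abs.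
  apply Rle_lt_trans with ((Rabs L + 1) * Rabs (u - x)).
  generalize (Rabs_pos (u-x)); nra.
  replace (pos eps) with ((Rabs L + 1) * (eps / (Rabs L + 1))) by (field; generalize (Rabs_pos L); lra).
  apply Rmult_lt_compat_l. generalize (Rabs_pos L); lra. exact Hu.
Qed.

Lemma Lip2_exRInt_t h s : Lip2 h -> ex_RInt (fun t => h s t) 0 1.
Proof.
  intros [[L HL] _]. apply (ex_RInt_continuous (V:=R_CompleteNormedModule)). intros z _.
  apply (lip_continuous _ L). intros y.
  eapply Rle_trans. apply HL. rewrite Rminus_diag, Rabs_R0, Rplus_0_l. lra.
Qed.

Lemma Lip2_exRInt_s h : Lip2 h -> ex_RInt (fun s => RInt (fun t => h s t) 0 1) 0 1.
Proof.
  intros Hh. pose proof Hh as [[L HL] _]. apply (ex_RInt_continuous (V:=R_CompleteNormedModule)). intros z _.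
  apply (lip_continuous _ L). intros y.
  rewrite <- RInt_minusR by (apply Lip2_exRInt_t; auto).
  replace (L * Rabs (y - z)) with ((1 - 0) * (L * Rabs (y - z))) by ring.
  apply abs_RInt_le_const. lra.
  apply (ex_RInt_minus (V:=R_NormedModule)); apply Lip2_exRInt_t; auto.
  intros t _. eapply Rle_trans. apply HL. rewrite Rminus_diag, Rabs_R0, Rplus_0_r. lra.
Qed.

Definition J (h : R -> R -> R) : R := RInt (fun s => RInt (fun t => h s t) 0 1) 0 1.

Lemma J_ext f g : (forall s t, f s t = g s t) -> J f = J g.
Proof.
  intros H. unfold J. apply RInt_ext. intros. apply RInt_ext. intros. apply H.
Qed.

Lemma J_plus f g : Lip2 f -> Lip2 g -> J (fun s t => f s t + g s t) = J f + J g.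
Proof.
  intros Hf Hg. unfold J. rewrite <- RInt_plusR by (apply Lip2_exRInt_s; auto).
  apply RInt_ext. intros. apply RInt_plusR; apply Lip2_exRInt_t; auto.
Qed.

Lemma J_minus f g : Lip2 f -> Lip2 g -> J (fun s t => f s t - g s t) = J f - J g.
Proof.
  intros Hf Hg. unfold J. rewrite <- RInt_minusR by (apply Lip2_exRInt_s; auto).
  apply RInt_ext. intros. apply RInt_minusR; apply Lip2_exRInt_t; auto.
Qed.

Lemma J_scal f c : Lip2 f -> J (fun s t => c * f s t) = c * J f.
Proof.
  intros Hf. unfold J. rewrite <- RInt_scalR by (apply Lip2_exRInt_s; auto).
  apply RInt_ext. intros. apply RInt_scalR; apply Lip2_exRInt_t; auto.
Qed.

Lemma J_bound f B : Lip2 f -> (forall s t, Rabs (f s t) <= B) -> Rabs (J f) <= B.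
Proof.
  intros Hf HB. unfold J. replace B with ((1 - 0) * B) by ring.
  apply abs_RInt_le_const. lra. apply Lip2_exRInt_s; auto.
  intros s _. replace B with ((1 - 0) * B) by ring.
  apply abs_RInt_le_const. lra. apply Lip2_exRInt_t; auto. auto.
Qed.
Inductive mon := Mo (c : R) (i j k l : nat).

Definition mono i j k l s t := cs s ^ i * sn s ^ j * (cs t ^ k * sn t ^ l).

Fixpoint evalL (L : list mon) (s t : R) : R :=
  match L with
  | nil => 0
  | Mo c i j k l :: r => c * mono i j k l s t + evalL r s t
  end.

Definition mu i j := RInt (fun t => cs t ^ i * sn t ^ j) 0 1.

Fixpoint sumL (L : list mon) : R :=
  match L with
  | nil => 0
  | Mo c i j k l :: r => c * (mu i j * mu k l) + sumL r
  end.

Lemma Lip2_mono i j k l : Lip2 (mono i j k l).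
Proof.
  unfold mono.
  apply (Lip2_mult (fun s t => cs s ^ i * sn s ^ j) (fun s t => cs t ^ k * sn t ^ l)).
  apply (Lip2_mult (fun s t => cs s ^ i) (fun s t => sn s ^ j)); apply Lip2_pow.
  apply Lip2_cs_s. apply Lip2_sn_s.
  apply (Lip2_mult (fun s t => cs t ^ k) (fun s t => sn t ^ l)); apply Lip2_pow.
  apply Lip2_cs_t. apply Lip2_sn_t.
Qed.

Lemma Lip2_evalL L : Lip2 (evalL L).
Proof.
  induction L as [|[c i j k l] r IH]; simpl.
  exact (Lip2_const 0).
  apply (Lip2_plus (fun s t => c * mono i j k l s t) (evalL r)); auto.
  apply (Lip2_mult (fun _ _ => c)). apply Lip2_const. apply Lip2_mono.
Qed.

Lemma ex_mu i j : ex_RInt (fun t => cs t ^ i * sn t ^ j) 0 1.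
Proof.
  apply (Lip2_exRInt_t (fun s t => cs t ^ i * sn t ^ j) 0).
  apply (Lip2_mult (fun s t => cs t ^ i) (fun s t => sn t ^ j)); apply Lip2_pow.
  apply Lip2_cs_t. apply Lip2_sn_t.
Qed.

Lemma J_mono i j k l : J (mono i j k l) = mu i j * mu k l.
Proof.
  unfold J, mono, mu.
  transitivity (RInt (fun s => RInt (fun t => cs t ^ k * sn t ^ l) 0 1 * (cs s ^ i * sn s ^ j)) 0 1).
  apply RInt_ext. intros. rewrite RInt_scalR by apply ex_mu. apply Rmult_comm.
  rewrite RInt_scalR by apply ex_mu. apply Rmult_comm.
Qed.

Lemma J_evalL L : J (evalL L) = sumL L.
Proof.
  induction L as [|[c i j k l] r IH]; simpl.
  - unfold J. rewrite (RInt_ext _ (fun _ => 0)). rewrite RInt_const. simpl.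
    unfold scal; simpl; unfold mult; simpl; ring.
    intros. rewrite RInt_const. unfold scal; simpl; unfold mult; simpl; ring.
  - rewrite (J_plus (fun s t => c * mono i j k l s t) (evalL r)).
    rewrite J_scal, J_mono, IH; auto. apply Lip2_mono.
    apply (Lip2_mult (fun _ _ => c)). apply Lip2_const. apply Lip2_mono.
    apply Lip2_evalL.
Qed.

Lemma mu_by (F : R -> R) v i j : (forall t, is_derive F t (cs t ^ i * sn t ^ j)) ->
  F 1 - F 0 = v -> mu i j = v.
Proof.
  intros HF Hv. unfold mu. rewrite <- Hv.
  apply is_RInt_unique.
  apply (is_RInt_derive (V:=R_CompleteNormedModule) F). intros; apply HF.
  intros. apply (ex_derive_continuous (V:=R_NormedModule)).
  unfold cs, sn. auto_derive. auto.
Qed.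

Lemma PI_neq0' : PI <> 0. Proof. apply PI_neq0. Qed.

Ltac endpts := unfold cs, sn; rewrite ?Rmult_1_r, ?Rmult_0_r, ?cos_2PI, ?sin_2PI, ?cos_0, ?sin_0;
   field; apply PI_neq0'.
Ltac derv := intros t; unfold cs, sn; auto_derive; [auto|];
   generalize (sin2_cos2 (2 * PI * t)); generalize PI_neq0';
   generalize (sin (2 * PI * t)) (cos (2 * PI * t)); intros;
   unfold Rsqr in *; try (field_simplify_eq; [|auto]);
   match goal with H0 : ?a * ?a + ?b * ?b = 1 |- _ =>
     let h := fresh in
     assert (h : forall m, m * (a * a + b * b) = m) by (intros; rewrite H0; ring);
     generalize (h PI) (h (PI * a)) (h (PI * b)) (h (PI*a*b)) (h (PI * a * a)) (h (PI*b*b)); intros; try lra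
   end.

Lemma mu00 : mu 0 0 = 1.
Proof. apply (mu_by (fun t => t)). derv. ring. Qed.
Lemma mu10 : mu 1 0 = 0.
Proof. apply (mu_by (fun t => sin (2*PI*t) / (2*PI))). derv. endpts. Qed.
Lemma mu01 : mu 0 1 = 0.
Proof. apply (mu_by (fun t => - cos (2*PI*t) / (2*PI))). derv. endpts. Qed.
Lemma mu20 : mu 2 0 = 1/2.
Proof. apply (mu_by (fun t => t/2 + sin (2*PI*t) * cos (2*PI*t) / (4*PI))). derv. endpts. Qed.
Lemma mu02 : mu 0 2 = 1/2.
Proof. apply (mu_by (fun t => t/2 - sin (2*PI*t) * cos (2*PI*t) / (4*PI))). derv. endpts. Qed.
Lemma mu11 : mu 1 1 = 0.
Proof. apply (mu_by (fun t => sin (2*PI*t) ^ 2 / (4*PI))). derv. endpts. Qed.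
Lemma mu30 : mu 3 0 = 0.
Proof. apply (mu_by (fun t => (sin (2*PI*t) - sin (2*PI*t) ^ 3 / 3) / (2*PI))). derv. endpts. Qed.
Lemma mu21 : mu 2 1 = 0.
Proof. apply (mu_by (fun t => - cos (2*PI*t) ^ 3 / (6*PI))). derv. endpts. Qed.
Lemma mu12 : mu 1 2 = 0.
Proof. apply (mu_by (fun t => sin (2*PI*t) ^ 3 / (6*PI))). derv. endpts. Qed.
Lemma mu03 : mu 0 3 = 0.
Proof. apply (mu_by (fun t => (- cos (2*PI*t) + cos (2*PI*t) ^ 3 / 3) / (2*PI))). derv. endpts. Qed.

Lemma Lip2_minus f g : Lip2 f -> Lip2 g -> Lip2 (fun s t => f s t - g s t).
Proof.
  intros Hf Hg.
  assert (H := Lip2_plus f (fun s t => -1 * g s t) Hf (Lip2_mult (fun _ _ => -1) g (Lip2_const _) Hg)).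
  destruct H as [[L HL] [B HB]]. split.
  exists L. intros. replace (f s t - g s t - (f s' t' - g s' t')) with (f s t + -1 * g s t - (f s' t' + -1 * g s' t')) by ring. auto.
  exists B. intros. replace (f s t - g s t) with (f s t + -1 * g s t) by ring. auto.
Qed.

Ltac lip := repeat first [ assumption | exact (Lip2_const _) | apply Lip2_evalL
  | apply Lip2_minus | apply Lip2_plus | apply Lip2_mult | apply Lip2_exp | apply Lip2_pow ].

Lemma abs_le_pow u M k : Rabs u <= M -> Rabs u ^ k <= M ^ k.
Proof. intros; apply pow_incr; split; auto using Rabs_pos. Qed.

Lemma tay1 u M : Rabs u <= M -> Rabs (exp u - 1) <= exp M * Rabs u.
Proof.
  intros Hu. replace (exp u - 1) with (exp u - exp 0) by (rewrite exp_0; ring).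
  replace (Rabs u) with (Rabs (u - 0)) by (f_equal; ring).
  apply (lip1 exp exp). apply is_derive_exp.
  intros x Hx. rewrite Rabs_pos_eq by (left; apply exp_pos).
  apply Rabs_le_between in Hu. unfold Rmin, Rmax in Hx.
  destruct (Rle_lt_or_eq_dec x M). destruct (Rle_dec 0 u); lra.
  left; now apply exp_increasing. right; now rewrite e.
Qed.

Lemma tay2 u M : Rabs u <= M -> Rabs (exp u - 1 - u) <= exp M * Rabs u ^ 2.
Proof.
  intros Hu. replace (exp u - 1 - u) with ((exp u - 1 - u) - (exp 0 - 1 - 0)) by (rewrite exp_0; ring).
  replace (exp M * Rabs u ^ 2) with ((exp M * Rabs u) * Rabs (u - 0)) by (rewrite Rminus_0_r; ring).
  apply (lip1 (fun x => exp x - 1 - x) (fun x => exp x - 1)).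
  intros x. auto_derive; auto; ring.
  intros x Hx. assert (Rabs x <= Rabs u).
  { unfold Rmin, Rmax in Hx. destruct (Rle_dec 0 u); apply Rabs_le; 
    [rewrite Rabs_pos_eq by lra | rewrite Rabs_left by lra]; lra. }
  eapply Rle_trans. apply tay1. eapply Rle_trans; eauto.
  apply Rmult_le_compat_l; auto. left; apply exp_pos.
Qed.

Lemma tay3 u M : Rabs u <= M -> Rabs (exp u - 1 - u - u^2/2) <= exp M * Rabs u ^ 3.
Proof.
  intros Hu. replace (exp u - 1 - u - u^2/2) with ((exp u - 1 - u - u^2/2) - (exp 0 - 1 - 0 - 0^2/2)) by (rewrite exp_0; field).
  replace (exp M * Rabs u ^ 3) with ((exp M * Rabs u ^ 2) * Rabs (u - 0)) by (rewrite Rminus_0_r; ring).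
  apply (lip1 (fun x => exp x - 1 - x - x^2/2) (fun x => exp x - 1 - x)).
  intros x. auto_derive; auto; field.
  intros x Hx. assert (Rabs x <= Rabs u).
  { unfold Rmin, Rmax in Hx. destruct (Rle_dec 0 u); apply Rabs_le; 
    [rewrite Rabs_pos_eq by lra | rewrite Rabs_left by lra]; lra. }
  eapply Rle_trans. apply tay2. eapply Rle_trans; eauto.
  apply Rmult_le_compat_l. left; apply exp_pos.
  apply pow_incr; split; auto using Rabs_pos.
Qed.

Lemma eP_bound e (P : R -> R -> R) BP s t : Rabs e <= 1 -> (forall s t, Rabs (P s t) <= BP) -> Rabs (e * P s t) <= BP.
Proof.
  intros He HP. rewrite Rabs_mult. specialize (HP s t).
  assert (0 <= Rabs (P s t)) by apply Rabs_pos.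
  assert (0 <= Rabs e) by apply Rabs_pos. nra.
Qed.

Lemma Rabs_eP e (P : R -> R -> R) BP s t k : (forall s t, Rabs (P s t) <= BP) -> Rabs (e * P s t) ^ k <= BP ^ k * Rabs e ^ k.
Proof.
  intros HP. rewrite Rabs_mult, Rpow_mult_distr, Rmult_comm.
  apply Rmult_le_compat_r. apply pow_le, Rabs_pos. apply abs_le_pow, HP.
Qed.

Lemma expand_gen (g P : R -> R -> R) Bg BP e k (R : R -> R) :
  Lip2 g -> (forall s t, Rabs (g s t) <= Bg) -> (forall s t, Rabs (P s t) <= BP) ->
  Lip2 (fun s t => g s t * R (e * P s t)) ->
  (forall u, Rabs u <= BP -> Rabs (R u) <= exp BP * Rabs u ^ k) -> Rabs e <= 1 ->
  Rabs (J (fun s t => g s t * R (e * P s t))) <= Bg * exp BP * BP ^ k * Rabs e ^ k.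
Proof.
  intros Hg HBg HBP HL HR He. apply J_bound; auto.
  intros s t. rewrite Rabs_mult.
  assert (0 <= Rabs (g s t)) by apply Rabs_pos.
  assert (Rabs (R (e * P s t)) <= exp BP * (BP ^ k * Rabs e ^ k)).
  { eapply Rle_trans. apply HR. apply eP_bound; auto.
    apply Rmult_le_compat_l. left; apply exp_pos. apply Rabs_eP; auto. }
  replace (Bg * exp BP * BP ^ k * Rabs e ^ k) with (Bg * (exp BP * (BP ^ k * Rabs e ^ k))) by ring.
  apply Rmult_le_compat; auto. apply Rabs_pos.
Qed.

Lemma expand1 (g P : R -> R -> R) Bg BP e : Lip2 g -> Lip2 P -> (forall s t, Rabs (g s t) <= Bg) -> (forall s t, Rabs (P s t) <= BP) ->
  Rabs e <= 1 ->
  Rabs (J (fun s t => g s t * exp (e * P s t)) - J g) <= Bg * exp BP * BP ^ 1 * Rabs e ^ 1.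
Proof.
  intros Hg HP HBg HBP He.
  assert (HeP : Lip2 (fun s t => e * P s t)) by lip.
  rewrite <- J_minus by lip.
  rewrite (J_ext _ (fun s t => g s t * (fun u => exp u - 1) (e * P s t))) by (intros; simpl; ring).
  apply (expand_gen g P Bg BP e 1 (fun u => exp u - 1)); auto. lip. intros; rewrite pow_1; apply tay1; auto.
Qed.

Lemma expand2 (g P : R -> R -> R) Bg BP e : Lip2 g -> Lip2 P -> (forall s t, Rabs (g s t) <= Bg) -> (forall s t, Rabs (P s t) <= BP) ->
  Rabs e <= 1 ->
  Rabs (J (fun s t => g s t * exp (e * P s t)) - J g - e * J (fun s t => g s t * P s t)) <= Bg * exp BP * BP ^ 2 * Rabs e ^ 2.
Proof.
  intros Hg HP HBg HBP He.
  assert (HeP : Lip2 (fun s t => e * P s t)) by lip.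
  rewrite <- J_scal by lip. rewrite <- !J_minus by lip.
  rewrite (J_ext _ (fun s t => g s t * (fun u => exp u - 1 - u) (e * P s t))) by (intros; simpl; ring).
  apply (expand_gen g P Bg BP e 2 (fun u => exp u - 1 - u)); auto. lip. intros; apply tay2; auto.
Qed.

Lemma expand3 (g P : R -> R -> R) Bg BP e : Lip2 g -> Lip2 P -> (forall s t, Rabs (g s t) <= Bg) -> (forall s t, Rabs (P s t) <= BP) ->
  Rabs e <= 1 ->
  Rabs (J (fun s t => g s t * exp (e * P s t)) - J g - e * J (fun s t => g s t * P s t)
        - e ^ 2 / 2 * J (fun s t => g s t * P s t ^ 2)) <= Bg * exp BP * BP ^ 3 * Rabs e ^ 3.
Proof.
  intros Hg HP HBg HBP He.
  assert (HeP : Lip2 (fun s t => e * P s t)) by lip.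
  rewrite <- !J_scal by lip. rewrite <- !J_minus by lip.
  rewrite (J_ext _ (fun s t => g s t * (fun u => exp u - 1 - u - u^2/2) (e * P s t))) by (intros; simpl; field).
  apply (expand_gen g P Bg BP e 3 (fun u => exp u - 1 - u - u^2/2)); auto. lip. intros; apply tay3; auto.
Qed.

Fixpoint sumabs (L : list mon) : R :=
  match L with nil => 0 | Mo c _ _ _ _ :: r => Rabs c + sumabs r end.

Lemma le1_mult a b : 0 <= a <= 1 -> 0 <= b <= 1 -> 0 <= a * b <= 1.
Proof. intros. split. nra. nra. Qed.

Lemma pow_abs_le1 x n : Rabs x <= 1 -> 0 <= Rabs x ^ n <= 1.
Proof. intros. split. apply pow_le, Rabs_pos. rewrite <- (pow1 n). apply pow_incr. split; auto using Rabs_pos. Qed.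

Lemma mono_bound i j k l s t : Rabs (mono i j k l s t) <= 1.
Proof.
  unfold mono, cs, sn. rewrite !Rabs_mult, <- !RPow_abs.
  apply le1_mult; [apply le1_mult|apply le1_mult]; apply pow_abs_le1;
  auto using abs_cos_le, abs_sin_le.
Qed.

Lemma evalL_bound L s t : Rabs (evalL L s t) <= sumabs L.
Proof.
  induction L as [|[c i j k l] r IH]; simpl. rewrite Rabs_R0; lra.
  eapply Rle_trans. apply Rabs_triang. rewrite Rabs_mult.
  generalize (mono_bound i j k l s t) (Rabs_pos c) (Rabs_pos (mono i j k l s t)). nra.
Qed.

Definition kc (i : nat) (k : R * R) : R := match i with O => fst k | _ => snd k end.

Lemma pd_ext i (F G : R -> R -> R) x y : (forall a b, F a b = G a b) -> pd i F x y = pd i G x y.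
Proof. intros H. destruct i; simpl; apply Derive_ext; intros; apply H. Qed.

Lemma pd_cos i a1 a2 a3 c0 x y :
  pd i (fun x y => a1 * cos (dot k1 (x, y)) + a2 * cos (dot k2 (x, y)) + a3 * cos (dot k3 (x, y)) + c0) x y
  = - (a1 * kc i k1 * sin (dot k1 (x, y)) + a2 * kc i k2 * sin (dot k2 (x, y)) + a3 * kc i k3 * sin (dot k3 (x, y))).
Proof.
  destruct i; simpl; apply is_derive_unique; unfold dot; simpl; auto_derive; auto; ring.
Qed.

Lemma pd_sin i a1 a2 a3 c0 x y :
  pd i (fun x y => a1 * sin (dot k1 (x, y)) + a2 * sin (dot k2 (x, y)) + a3 * sin (dot k3 (x, y)) + c0) x y
  = a1 * kc i k1 * cos (dot k1 (x, y)) + a2 * kc i k2 * cos (dot k2 (x, y)) + a3 * kc i k3 * cos (dot k3 (x, y)).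
Proof.
  destruct i; simpl; apply is_derive_unique; unfold dot; simpl; auto_derive; auto; ring.
Qed.

Definition C1 x y := cos (dot k1 (x, y)).
Definition C2 x y := cos (dot k2 (x, y)).
Definition C3 x y := cos (dot k3 (x, y)).
Definition S1 x y := sin (dot k1 (x, y)).
Definition S2 x y := sin (dot k2 (x, y)).
Definition S3 x y := sin (dot k3 (x, y)).

Lemma ln_feps e a b : 0 < Zeps e ->
  ln (feps e a b) = e * cos (dot k1 (a, b)) + e * cos (dot k2 (a, b)) + e * cos (dot k3 (a, b)) + - ln (Zeps e).
Proof.
  intros HZ. unfold feps. rewrite ln_div by (auto; apply exp_pos). rewrite ln_exp.
  unfold phi. ring.
Qed.

Lemma Hf_eq e i j x y : 0 < Zeps e ->
  Hf (feps e) i j x y = e * (kc i k1 * kc j k1 * C1 x y + kc i k2 * kc j k2 * C2 x y + kc i k3 * kc j k3 * C3 x y).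
Proof.
  intros HZ. unfold Hf.
  rewrite (pd_ext i _ (fun a b => (- (e * kc j k1)) * sin (dot k1 (a, b)) + (- (e * kc j k2)) * sin (dot k2 (a, b))
      + (- (e * kc j k3)) * sin (dot k3 (a, b)) + 0)).
  rewrite pd_sin. unfold C1, C2, C3. ring.
  intros a b. rewrite (pd_ext j _ _ a b (fun a b => ln_feps e a b HZ)). rewrite pd_cos. ring.
Qed.

Lemma pdHf_eq e i j k x y : 0 < Zeps e ->
  pd k (Hf (feps e) i j) x y = - e * (kc i k1 * kc j k1 * kc k k1 * S1 x y + kc i k2 * kc j k2 * kc k k2 * S2 x y
     + kc i k3 * kc j k3 * kc k k3 * S3 x y).
Proof.
  intros HZ.
  rewrite (pd_ext k _ (fun a b => (e * kc i k1 * kc j k1) * cos (dot k1 (a, b)) + (e * kc i k2 * kc j k2) * cos (dot k2 (a, b))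
      + (e * kc i k3 * kc j k3) * cos (dot k3 (a, b)) + 0)).
  rewrite pd_cos. unfold S1, S2, S3. ring.
  intros a b. rewrite Hf_eq by auto. unfold C1, C2, C3. ring.
Qed.

Lemma sqrt3_sq : sqrt 3 * sqrt 3 = 3.
Proof. apply sqrt_sqrt. lra. Qed.

Ltac sq3 := let r := fresh "r" in let Hr := fresh in
  generalize sqrt3_sq; generalize (sqrt 3); intros r Hr;
  let H2 := fresh in let H4 := fresh in let H6 := fresh in
  assert (H2 : r ^ 2 = 3) by (rewrite <- Hr; ring);
  assert (H4 : r ^ 4 = 9) by (replace (r ^ 4) with (r ^ 2 * r ^ 2) by ring; rewrite H2; ring);
  assert (H6 : r ^ 6 = 27) by (replace (r ^ 6) with (r ^ 2 * r ^ 4) by ring; rewrite H2, H4; ring);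
  field_simplify_eq; rewrite ?H6, ?H4, ?H2; ring.

Definition T2C c1 c2 c3 := c1^2 + c2^2 + c3^2 + /2 * (c1*c2 + c1*c3 + c2*c3).
Definition GC s1 s2 s3 := s1^2 + s2^2 + s3^2 - /4 * (s1*s2 + s1*s3 + s2*s3).
Definition T3C c1 c2 c3 := c1^3 + c2^3 + c3^3
  + 3/4 * (c1^2*c2 + c1^2*c3 + c2^2*c1 + c2^2*c3 + c3^2*c1 + c3^2*c2) - 3/4 * (c1*c2*c3).

Lemma trH_eq e x y : 0 < Zeps e -> trH (feps e) x y = e * (C1 x y + C2 x y + C3 x y).
Proof.
  intros HZ. unfold trH, sum2. rewrite !Hf_eq by auto. unfold kc, k1, k2, k3; simpl. sq3.
Qed.

Lemma trH2_eq e x y : 0 < Zeps e -> trH2 (feps e) x y = e^2 * T2C (C1 x y) (C2 x y) (C3 x y).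
Proof.
  intros HZ. unfold trH2, sum2. rewrite !Hf_eq by auto. unfold T2C, kc, k1, k2, k3; simpl. sq3.
Qed.

Lemma trH3_eq e x y : 0 < Zeps e -> trH3 (feps e) x y = e^3 * T3C (C1 x y) (C2 x y) (C3 x y).
Proof.
  intros HZ. unfold trH3, sum2. rewrite !Hf_eq by auto. unfold T3C, kc, k1, k2, k3; simpl. sq3.
Qed.

Lemma gradH2_eq e x y : 0 < Zeps e -> gradH2 (feps e) x y = e^2 * GC (S1 x y) (S2 x y) (S3 x y).
Proof.
  intros HZ. unfold gradH2, sum2. rewrite !pdHf_eq by auto. unfold GC, kc, k1, k2, k3; simpl. sq3.
Qed.
Definition L1 : list mon := Mo (1) 0 0 0 0 :: nil.
Definition LPhi : list mon := Mo (1) 0 0 1 0 ::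
  Mo (-1) 0 1 0 1 ::
  Mo (1) 1 0 0 0 ::
  Mo (1) 1 0 1 0 :: nil.
Definition LT2 : list mon := Mo (1) 0 0 2 0 ::
  Mo (-1/2) 0 1 1 1 ::
  Mo (1) 0 2 0 2 ::
  Mo (1/2) 1 0 1 0 ::
  Mo (1/2) 1 0 2 0 ::
  Mo (-1/2) 1 1 0 1 ::
  Mo (-2) 1 1 1 1 ::
  Mo (1) 2 0 0 0 ::
  Mo (1/2) 2 0 1 0 ::
  Mo (1) 2 0 2 0 :: nil.
Definition LG : list mon := Mo (1) 0 0 0 2 ::
  Mo (-1/4) 0 1 0 1 ::
  Mo (1/4) 0 1 1 1 ::
  Mo (1) 0 2 0 0 ::
  Mo (1/4) 0 2 1 0 ::
  Mo (1) 0 2 2 0 ::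
  Mo (1/4) 1 0 0 2 ::
  Mo (1/4) 1 1 0 1 ::
  Mo (2) 1 1 1 1 ::
  Mo (1) 2 0 0 2 :: nil.
Definition LT3 : list mon := Mo (1) 0 0 3 0 ::
  Mo (-3/4) 0 1 2 1 ::
  Mo (3/4) 0 2 1 2 ::
  Mo (-1) 0 3 0 3 ::
  Mo (3/4) 1 0 2 0 ::
  Mo (3/4) 1 0 3 0 ::
  Mo (3/4) 1 1 1 1 ::
  Mo (-3/2) 1 1 2 1 ::
  Mo (3/4) 1 2 0 2 ::
  Mo (3) 1 2 1 2 ::
  Mo (3/4) 2 0 1 0 ::
  Mo (-3/4) 2 0 2 0 ::
  Mo (3/4) 2 0 3 0 ::
  Mo (-3/4) 2 1 0 1 ::
  Mo (-3/2) 2 1 1 1 ::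
  Mo (-3) 2 1 2 1 ::
  Mo (1) 3 0 0 0 ::
  Mo (3/4) 3 0 1 0 ::
  Mo (3/4) 3 0 2 0 ::
  Mo (1) 3 0 3 0 :: nil.
Definition LPhi2 : list mon := Mo (1) 0 0 2 0 ::
  Mo (-2) 0 1 1 1 ::
  Mo (1) 0 2 0 2 ::
  Mo (2) 1 0 1 0 ::
  Mo (2) 1 0 2 0 ::
  Mo (-2) 1 1 0 1 ::
  Mo (-2) 1 1 1 1 ::
  Mo (1) 2 0 0 0 ::
  Mo (2) 2 0 1 0 ::
  Mo (1) 2 0 2 0 :: nil.
Definition LPhi3 : list mon := Mo (1) 0 0 3 0 ::
  Mo (-3) 0 1 2 1 ::
  Mo (3) 0 2 1 2 ::
  Mo (-1) 0 3 0 3 ::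
  Mo (3) 1 0 2 0 ::
  Mo (3) 1 0 3 0 ::
  Mo (-6) 1 1 1 1 ::
  Mo (-6) 1 1 2 1 ::
  Mo (3) 1 2 0 2 ::
  Mo (3) 1 2 1 2 ::
  Mo (3) 2 0 1 0 ::
  Mo (6) 2 0 2 0 ::
  Mo (3) 2 0 3 0 ::
  Mo (-3) 2 1 0 1 ::
  Mo (-6) 2 1 1 1 ::
  Mo (-3) 2 1 2 1 ::
  Mo (1) 3 0 0 0 ::
  Mo (3) 3 0 1 0 ::
  Mo (3) 3 0 2 0 ::
  Mo (1) 3 0 3 0 :: nil.
Definition LT2Phi : list mon := Mo (1) 0 0 3 0 ::
  Mo (-3/2) 0 1 2 1 ::
  Mo (3/2) 0 2 1 2 ::
  Mo (-1) 0 3 0 3 ::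
  Mo (3/2) 1 0 2 0 ::
  Mo (3/2) 1 0 3 0 ::
  Mo (-3/2) 1 1 1 1 ::
  Mo (-3) 1 1 2 1 ::
  Mo (3/2) 1 2 0 2 ::
  Mo (3) 1 2 1 2 ::
  Mo (3/2) 2 0 1 0 ::
  Mo (3/2) 2 0 2 0 ::
  Mo (3/2) 2 0 3 0 ::
  Mo (-3/2) 2 1 0 1 ::
  Mo (-3) 2 1 1 1 ::
  Mo (-3) 2 1 2 1 ::
  Mo (1) 3 0 0 0 ::
  Mo (3/2) 3 0 1 0 ::
  Mo (3/2) 3 0 2 0 ::
  Mo (1) 3 0 3 0 :: nil.
Definition LGPhi : list mon := Mo (1) 0 0 1 2 ::
  Mo (-1) 0 1 0 3 ::
  Mo (-1/4) 0 1 1 1 ::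
  Mo (1/4) 0 1 2 1 ::
  Mo (1/4) 0 2 0 2 ::
  Mo (1) 0 2 1 0 ::
  Mo (-1/4) 0 2 1 2 ::
  Mo (1/4) 0 2 2 0 ::
  Mo (1) 0 2 3 0 ::
  Mo (-1) 0 3 0 1 ::
  Mo (-1/4) 0 3 1 1 ::
  Mo (-1) 0 3 2 1 ::
  Mo (1) 1 0 0 2 ::
  Mo (5/4) 1 0 1 2 ::
  Mo (-1/4) 1 1 0 1 ::
  Mo (-1/4) 1 1 0 3 ::
  Mo (1/4) 1 1 1 1 ::
  Mo (9/4) 1 1 2 1 ::
  Mo (1) 1 2 0 0 ::
  Mo (-1/4) 1 2 0 2 ::
  Mo (5/4) 1 2 1 0 ::
  Mo (-2) 1 2 1 2 ::
  Mo (5/4) 1 2 2 0 ::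
  Mo (1) 1 2 3 0 ::
  Mo (1/4) 2 0 0 2 ::
  Mo (5/4) 2 0 1 2 ::
  Mo (1/4) 2 1 0 1 ::
  Mo (-1) 2 1 0 3 ::
  Mo (9/4) 2 1 1 1 ::
  Mo (2) 2 1 2 1 ::
  Mo (1) 3 0 0 2 ::
  Mo (1) 3 0 1 2 :: nil.

Definition Xc s t := s * fst a1 + t * fst a2.
Definition Yc s t := s * snd a1 + t * snd a2.

Lemma sqrt3_pos : 0 < sqrt 3. Proof. apply sqrt_lt_R0. lra. Qed.

Lemma dot1 s t : dot k1 (Xc s t, Yc s t) = 2 * PI * s.
Proof. unfold dot, k1, Xc, Yc, a1, a2; simpl. ring. Qed.
Lemma dot2 s t : dot k2 (Xc s t, Yc s t) = 2 * PI * t.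
Proof. unfold dot, k2, Xc, Yc, a1, a2; simpl. field. generalize sqrt3_pos; lra. Qed.
Lemma dot3 s t : dot k3 (Xc s t, Yc s t) = - (2 * PI * s + 2 * PI * t).
Proof. unfold dot, k3, Xc, Yc, a1, a2; simpl. field. generalize sqrt3_pos; lra. Qed.

Lemma C1_st s t : C1 (Xc s t) (Yc s t) = cs s. Proof. unfold C1. rewrite dot1. reflexivity. Qed.
Lemma C2_st s t : C2 (Xc s t) (Yc s t) = cs t. Proof. unfold C2. rewrite dot2. reflexivity. Qed.
Lemma C3_st s t : C3 (Xc s t) (Yc s t) = cs s * cs t - sn s * sn t.
Proof. unfold C3. rewrite dot3, cos_neg, cos_plus. reflexivity. Qed.
Lemma S1_st s t : S1 (Xc s t) (Yc s t) = sn s. Proof. unfold S1. rewrite dot1. reflexivity. Qed.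
Lemma S2_st s t : S2 (Xc s t) (Yc s t) = sn t. Proof. unfold S2. rewrite dot2. reflexivity. Qed.
Lemma S3_st s t : S3 (Xc s t) (Yc s t) = - (sn s * cs t + cs s * sn t).
Proof. unfold S3. rewrite dot3, sin_neg, sin_plus. reflexivity. Qed.

Ltac st := rewrite ?C1_st, ?C2_st, ?C3_st, ?S1_st, ?S2_st, ?S3_st.

Definition Phi s t := evalL LPhi s t.

Lemma phi_st s t : phi (Xc s t) (Yc s t) = Phi s t.
Proof. unfold phi. fold (C1 (Xc s t) (Yc s t)) (C2 (Xc s t) (Yc s t)) (C3 (Xc s t) (Yc s t)).
  st. unfold Phi, LPhi; simpl; unfold mono; ring. Qed.

Lemma avg_J G : avg G = J (fun s t => G (Xc s t) (Yc s t)).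
Proof. reflexivity. Qed.

Definition Zs e := J (fun s t => exp (e * Phi s t)).
Definition NI e := J (fun s t => Phi s t * exp (e * Phi s t)).
Definition NQ e := J (fun s t => evalL LT2 s t * exp (e * Phi s t)).
Definition NG e := J (fun s t => evalL LG s t * exp (e * Phi s t)).
Definition N3 e := J (fun s t => evalL LT3 s t * exp (e * Phi s t)).

Lemma Zeps_eq e : Zeps e = Zs e.
Proof. unfold Zeps. rewrite avg_J. apply J_ext. intros. rewrite phi_st. reflexivity. Qed.

Lemma Lip2_Phi : Lip2 Phi. Proof. apply Lip2_evalL. Qed.

Lemma Ifun_eq e : 0 < Zs e -> Ifun (feps e) = e / Zs e * NI e.
Proof.
  intros HZ. assert (HZ' : 0 < Zeps e) by (rewrite Zeps_eq; auto).
  unfold Ifun. rewrite avg_J. unfold NI. rewrite <- J_scal.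
  apply J_ext. intros s t. rewrite trH_eq by auto. unfold feps. rewrite phi_st, Zeps_eq.
  st. unfold Phi, LPhi; simpl; unfold mono. field. lra.
  unfold Phi; lip.
Qed.

Lemma Qfun_eq e : 0 < Zs e -> Qfun (feps e) = e^2 / Zs e * NQ e.
Proof.
  intros HZ. assert (HZ' : 0 < Zeps e) by (rewrite Zeps_eq; auto).
  unfold Qfun. rewrite avg_J. unfold NQ. rewrite <- J_scal.
  apply J_ext. intros s t. rewrite trH2_eq by auto. unfold feps. rewrite phi_st, Zeps_eq.
  st. unfold T2C, LT2; simpl; unfold mono. field. lra.
  unfold Phi; lip.
Qed.

Lemma Dfun_eq e : 0 < Zs e -> Dfun (feps e) = e^2 / Zs e * NG e + 2 * e^3 / Zs e * N3 e.
Proof.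
  intros HZ. assert (HZ' : 0 < Zeps e) by (rewrite Zeps_eq; auto).
  unfold Dfun. rewrite avg_J. unfold NG, N3. rewrite <- !J_scal, <- J_plus.
  apply J_ext. intros s t. rewrite gradH2_eq, trH3_eq by auto. unfold feps. rewrite phi_st, Zeps_eq.
  st. unfold GC, T3C, LG, LT3; simpl; unfold mono. field. lra.
  all: unfold Phi; lip.
Qed.

Ltac muval := rewrite ?mu00, ?mu10, ?mu01, ?mu20, ?mu02, ?mu11, ?mu30, ?mu21, ?mu12, ?mu03.

Ltac jval L := first [ rewrite J_evalL | rewrite (J_ext _ (evalL L)) by (intros; unfold Phi; simpl; unfold mono; field);
  rewrite J_evalL]; unfold L; cbn [sumL]; muval; field.

Lemma J_L1 : J (evalL L1) = 1. Proof. jval L1. Qed.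
Lemma J_LPhi : J (fun s t => evalL L1 s t * Phi s t) = 0. Proof. jval LPhi. Qed.
Lemma J_Phi : J Phi = 0. Proof. unfold Phi; jval LPhi. Qed.
Lemma J_Phi2 : J (fun s t => Phi s t * Phi s t) = 3/2. Proof. jval LPhi2. Qed.
Lemma J_Phi3 : J (fun s t => Phi s t * Phi s t ^ 2) = 3/2. Proof. jval LPhi3. Qed.
Lemma J_T2 : J (evalL LT2) = 3/2. Proof. jval LT2. Qed.
Lemma J_T2Phi : J (fun s t => evalL LT2 s t * Phi s t) = 3/8. Proof. jval LT2Phi. Qed.
Lemma J_G : J (evalL LG) = 3/2. Proof. jval LG. Qed.
Lemma J_GPhi : J (fun s t => evalL LG s t * Phi s t) = 3/16. Proof. jval LGPhi. Qed.
Lemma J_T3 : J (evalL LT3) = -3/16. Proof. jval LT3. Qed.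

Lemma bO_ext_loc (f g : R -> R) n : (exists d, 0 < d /\ forall e, 0 < Rabs e < d -> f e = g e) ->
  bigO0 g n -> bigO0 f n.
Proof.
  intros [d [Hd Hfg]] [C [d' [Hd' H]]]. exists C, (Rmin d d'). split.
  apply Rmin_glb_lt; auto.
  intros e He. rewrite Hfg. apply H. split. lra. eapply Rlt_le_trans. apply He. apply Rmin_r.
  split. lra. eapply Rlt_le_trans. apply He. apply Rmin_l.
Qed.

Lemma bO_ext (f g : R -> R) n : (forall e, f e = g e) -> bigO0 g n -> bigO0 f n.
Proof. intros H. apply bO_ext_loc. exists 1. split. lra. auto. Qed.

Lemma bO_C_nonneg g n C d : 0 < d -> (forall e, 0 < Rabs e < d -> Rabs (g e) <= C * Rabs e ^ n) -> 0 <= C.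
Proof.
  intros Hd H. specialize (H (d/2)). rewrite Rabs_pos_eq in H by lra.
  assert (Hp : 0 < (d/2) ^ n) by (apply pow_lt; lra).
  assert (Rabs (g (d/2)) <= C * (d/2)^n) by (apply H; lra).
  generalize (Rabs_pos (g (d/2))). intros. destruct (Rle_dec 0 C); auto. nra.
Qed.

Lemma bO_add f g n : bigO0 f n -> bigO0 g n -> bigO0 (fun e => f e + g e) n.
Proof.
  intros [C1 [d1 [Hd1 H1]]] [C2 [d2 [Hd2 H2]]]. exists (C1 + C2), (Rmin d1 d2). split.
  apply Rmin_glb_lt; auto.
  intros e He. assert (He1 : 0 < Rabs e < d1) by (split; [lra| eapply Rlt_le_trans; [apply He| apply Rmin_l]]).
  assert (He2 : 0 < Rabs e < d2) by (split; [lra| eapply Rlt_le_trans; [apply He| apply Rmin_r]]).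
  eapply Rle_trans. apply Rabs_triang. specialize (H1 e He1). specialize (H2 e He2). lra.
Qed.

Lemma bO_mul f g n m : bigO0 f n -> bigO0 g m -> bigO0 (fun e => f e * g e) (n + m).
Proof.
  intros [C1 [d1 [Hd1 H1]]] [C2 [d2 [Hd2 H2]]].
  assert (0 <= C1) by (apply (bO_C_nonneg f n C1 d1); auto).
  exists (C1 * C2), (Rmin d1 d2). split.
  apply Rmin_glb_lt; auto.
  intros e He. assert (He1 : 0 < Rabs e < d1) by (split; [lra| eapply Rlt_le_trans; [apply He| apply Rmin_l]]).
  assert (He2 : 0 < Rabs e < d2) by (split; [lra| eapply Rlt_le_trans; [apply He| apply Rmin_r]]).
  rewrite Rabs_mult, pow_add.
  replace (C1 * C2 * (Rabs e ^ n * Rabs e ^ m)) with ((C1 * Rabs e ^ n) * (C2 * Rabs e ^ m)) by ring.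
  apply Rmult_le_compat; auto using Rabs_pos.
Qed.

Lemma bO_mon c n : bigO0 (fun e => c * e ^ n) n.
Proof.
  exists (Rabs c), 1. split. lra. intros e _. rewrite Rabs_mult, RPow_abs. lra.
Qed.

Lemma bO_weak f n m : (m <= n)%nat -> bigO0 f n -> bigO0 f m.
Proof.
  intros Hmn [C [d [Hd H]]]. assert (0 <= C) by (apply (bO_C_nonneg f n C d); auto).
  exists C, (Rmin d 1). split. apply Rmin_glb_lt; lra.
  intros e He. assert (He1 : 0 < Rabs e < d) by (split; [lra| eapply Rlt_le_trans; [apply He| apply Rmin_l]]).
  assert (Hl : Rabs e < 1) by (eapply Rlt_le_trans; [apply He| apply Rmin_r]).
  eapply Rle_trans. apply H; auto. apply Rmult_le_compat_l; auto.
  replace n with (m + (n - m))%nat by lia. rewrite pow_add.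
  assert (0 <= Rabs e ^ m) by (apply pow_le, Rabs_pos).
  assert (Rabs e ^ (n - m) <= 1) by (rewrite <- (pow1 (n - m)); apply pow_incr; split; [apply Rabs_pos|lra]).
  nra.
Qed.

Lemma bO_pos f c : bigO0 (fun e => f e - c) 1 -> 0 < c ->
  exists d, 0 < d /\ forall e, 0 < Rabs e < d -> c / 2 < f e.
Proof.
  intros [C [d [Hd H]]] Hc. assert (0 <= C) by (apply (bO_C_nonneg (fun e => f e - c) 1 C d); auto).
  exists (Rmin d (c / (2 * (C + 1)))). split. apply Rmin_glb_lt; auto. apply Rdiv_lt_0_compat; lra.
  intros e He. assert (He1 : 0 < Rabs e < d) by (split; [lra| eapply Rlt_le_trans; [apply He| apply Rmin_l]]).
  assert (Hl : Rabs e < c / (2 * (C + 1))) by (eapply Rlt_le_trans; [apply He| apply Rmin_r]).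
  specialize (H e He1). rewrite pow_1 in H.
  assert (C * Rabs e < c / 2).
  { apply Rle_lt_trans with ((C + 1) * Rabs e). nra.
    replace (c / 2) with ((C + 1) * (c / (2 * (C + 1)))) by (field; lra).
    apply Rmult_lt_compat_l; lra. }
  apply Rabs_le_between in H. lra.
Qed.

Lemma bO_inv f c : bigO0 (fun e => f e - c) 1 -> 0 < c -> bigO0 (fun e => / f e) 0.
Proof.
  intros H Hc. destruct (bO_pos f c H Hc) as [d [Hd Hf]].
  exists (2 / c), d. split; auto. intros e He. specialize (Hf e He).
  rewrite pow_O, Rmult_1_r. rewrite Rabs_pos_eq by (left; apply Rinv_0_lt_compat; lra).
  replace (2 / c) with (/ (c / 2)) by (field; lra).
  apply Rinv_le_contravar; lra.
Qed.

Lemma bO_div_pow f n k : bigO0 f (n + k) -> bigO0 (fun e => f e / e ^ k) n.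
Proof.
  intros [C [d [Hd H]]]. exists C, d. split; auto. intros e He.
  assert (Hk : 0 < Rabs e ^ k) by (apply pow_lt; lra).
  unfold Rdiv. rewrite Rabs_mult, Rabs_inv, <- RPow_abs.
  specialize (H e He). rewrite pow_add in H.
  apply (Rmult_le_reg_r (Rabs e ^ k)); auto.
  rewrite Rmult_assoc, Rinv_l by lra. lra.
Qed.

Lemma from_bound f n K : (forall e, Rabs e <= 1 -> Rabs (f e) <= K * Rabs e ^ n) -> bigO0 f n.
Proof. intros H. exists K, 1. split. lra. intros e He. apply H. lra. Qed.

Lemma Z_O : bigO0 (fun e => Zs e - 1) 2.
Proof.
  apply (from_bound _ _ (sumabs L1 * exp (sumabs LPhi) * sumabs LPhi ^ 2)). intros e He.
  pose proof (expand2 (evalL L1) Phi (sumabs L1) (sumabs LPhi) e (Lip2_evalL _) Lip2_Phi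
    (evalL_bound L1) (evalL_bound LPhi) He) as H.
  rewrite J_L1, J_LPhi in H.
  rewrite (J_ext _ (fun s t => exp (e * Phi s t))) in H by (intros; simpl; unfold mono; ring).
  fold (Zs e) in H. replace (Zs e - 1) with (Zs e - 1 - e * 0) by ring. exact H.
Qed.

Lemma NI_O : bigO0 (fun e => NI e - (3/2 * e + 3/4 * e^2)) 3.
Proof.
  apply (from_bound _ _ (sumabs LPhi * exp (sumabs LPhi) * sumabs LPhi ^ 3)). intros e He.
  pose proof (expand3 Phi Phi (sumabs LPhi) (sumabs LPhi) e Lip2_Phi Lip2_Phi
    (evalL_bound LPhi) (evalL_bound LPhi) He) as H.
  rewrite J_Phi, J_Phi2, J_Phi3 in H. fold (NI e) in H.
  replace (NI e - (3/2 * e + 3/4 * e^2)) with (NI e - 0 - e * (3/2) - e^2/2 * (3/2)) by field. exact H.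
Qed.

Lemma NQ_O : bigO0 (fun e => NQ e - (3/2 + 3/8 * e)) 2.
Proof.
  apply (from_bound _ _ (sumabs LT2 * exp (sumabs LPhi) * sumabs LPhi ^ 2)). intros e He.
  pose proof (expand2 (evalL LT2) Phi (sumabs LT2) (sumabs LPhi) e (Lip2_evalL _) Lip2_Phi
    (evalL_bound LT2) (evalL_bound LPhi) He) as H.
  rewrite J_T2, J_T2Phi in H. fold (NQ e) in H.
  replace (NQ e - (3/2 + 3/8 * e)) with (NQ e - 3/2 - e * (3/8)) by ring. exact H.
Qed.

Lemma NG_O : bigO0 (fun e => NG e - (3/2 + 3/16 * e)) 2.
Proof.
  apply (from_bound _ _ (sumabs LG * exp (sumabs LPhi) * sumabs LPhi ^ 2)). intros e He.
  pose proof (expand2 (evalL LG) Phi (sumabs LG) (sumabs LPhi) e (Lip2_evalL _) Lip2_Phi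
    (evalL_bound LG) (evalL_bound LPhi) He) as H.
  rewrite J_G, J_GPhi in H. fold (NG e) in H.
  replace (NG e - (3/2 + 3/16 * e)) with (NG e - 3/2 - e * (3/16)) by ring. exact H.
Qed.

Lemma N3_O : bigO0 (fun e => N3 e - (-3/16)) 1.
Proof.
  apply (from_bound _ _ (sumabs LT3 * exp (sumabs LPhi) * sumabs LPhi ^ 1)). intros e He.
  pose proof (expand1 (evalL LT3) Phi (sumabs LT3) (sumabs LPhi) e (Lip2_evalL _) Lip2_Phi
    (evalL_bound LT3) (evalL_bound LPhi) He) as H.
  rewrite J_T3 in H. fold (N3 e) in H. exact H.
Qed.

Lemma bO_id : bigO0 (fun e => e) 1.
Proof. apply (bO_ext _ (fun e => 1 * e ^ 1)). intros; ring. apply bO_mon. Qed.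

Lemma poly23 c1 c2 : bigO0 (fun e => c1 * e^2 + c2 * e^3) 2.
Proof. apply bO_add. apply bO_mon. apply (bO_weak _ 3). lia. apply bO_mon. Qed.

Lemma Zpos_near : exists d, 0 < d /\ forall e, 0 < Rabs e < d -> 1 / 2 < Zs e.
Proof. apply (bO_pos Zs 1). apply (bO_weak _ 2). lia. exact Z_O. lra. Qed.

Lemma Zinv_O : bigO0 (fun e => / Zs e) 0.
Proof. apply (bO_inv Zs 1). apply (bO_weak _ 2). lia. exact Z_O. lra. Qed.

Definition aI e := 3/2 * e^2 + 3/4 * e^3.
Definition aQ e := 3/2 * e^2 + 3/8 * e^3.
Definition aD e := 3/2 * e^2 - 3/16 * e^3.

Lemma I_O : bigO0 (fun e => Ifun (feps e) - (3/2 * e^2 + 3/4 * e^3)) 4.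
Proof.
  destruct Zpos_near as [d [Hd HZ]].
  apply bO_ext_loc with (g := fun e => (e * (NI e - (3/2 * e + 3/4 * e^2)) + (-3/2 * e^2 + -3/4 * e^3) * (Zs e - 1)) * / Zs e).
  { exists d. split; auto. intros e He. specialize (HZ e He).
    rewrite Ifun_eq by lra. field. lra. }
  apply (bO_mul _ _ 4 0). 2: exact Zinv_O.
  apply bO_add. apply (bO_mul _ _ 1 3). exact bO_id. exact NI_O.
  apply (bO_mul _ _ 2 2). apply poly23. exact Z_O.
Qed.

Lemma Q_O : bigO0 (fun e => Qfun (feps e) - (3/2 * e^2 + 3/8 * e^3)) 4.
Proof.
  destruct Zpos_near as [d [Hd HZ]].
  apply bO_ext_loc with (g := fun e => (1 * e^2 * (NQ e - (3/2 + 3/8 * e)) + (-3/2 * e^2 + -3/8 * e^3) * (Zs e - 1)) * / Zs e).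
  { exists d. split; auto. intros e He. specialize (HZ e He).
    rewrite Qfun_eq by lra. field. lra. }
  apply (bO_mul _ _ 4 0). 2: exact Zinv_O.
  apply bO_add. apply (bO_mul _ _ 2 2). apply bO_mon. exact NQ_O.
  apply (bO_mul _ _ 2 2). apply poly23. exact Z_O.
Qed.

Lemma D_O : bigO0 (fun e => Dfun (feps e) - (3/2 * e^2 - 3/16 * e^3)) 4.
Proof.
  destruct Zpos_near as [d [Hd HZ]].
  apply bO_ext_loc with (g := fun e => ((1 * e^2 * (NG e - (3/2 + 3/16 * e)) + 2 * e^3 * (N3 e - (-3/16)))
      + (-3/2 * e^2 + 3/16 * e^3) * (Zs e - 1)) * / Zs e).
  { exists d. split; auto. intros e He. specialize (HZ e He).
    rewrite Dfun_eq by lra. field. lra. }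
  apply (bO_mul _ _ 4 0). 2: exact Zinv_O.
  apply bO_add. apply bO_add.
  apply (bO_mul _ _ 2 2). apply bO_mon. exact NG_O.
  apply (bO_mul _ _ 3 1). apply bO_mon. exact N3_O.
  apply (bO_mul _ _ 2 2). apply poly23. exact Z_O.
Qed.

Definition II e := Ifun (feps e).
Definition QQ e := Qfun (feps e).
Definition DD e := Dfun (feps e).

Lemma P_O : bigO0 (fun e => II e * DD e - QQ e ^ 2 - (- (9/32) * e^5)) 6.
Proof.
  apply (bO_ext _ (fun e => (-9/32) * e^6 + aI e * (DD e - aD e) + aD e * (II e - aI e)
     + (II e - aI e) * (DD e - aD e) + (-2 * aQ e) * (QQ e - aQ e) + (-1 * (QQ e - aQ e)) * (QQ e - aQ e))).
  { intros e. unfold aI, aD, aQ. field. }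
  assert (HI := I_O). assert (HQ := Q_O). assert (HD := D_O).

  repeat apply bO_add.
  - apply bO_mon.
  - apply (bO_mul _ _ 2 4). apply poly23. exact HD.
  - apply (bO_mul _ _ 2 4). apply (bO_ext _ (fun e => 3/2 * e^2 + (-3/16) * e^3)). intros; unfold aD; field. apply poly23. exact HI.
  - apply (bO_weak _ 8). lia. apply (bO_mul _ _ 4 4). exact HI. exact HD.
  - apply (bO_mul _ _ 2 4). apply (bO_ext _ (fun e => (-3) * e^2 + (-3/4) * e^3)). intros; unfold aQ; field. apply poly23. exact HQ.
  - apply (bO_weak _ 8). lia. apply (bO_mul _ _ 4 4). apply (bO_mul _ _ 0 4). apply (bO_ext _ (fun e => -1 * e^0)). intros; simpl; ring. apply bO_mon. exact HQ. exact HQ.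
Qed.

Lemma R_O : bigO0 (fun e => II e * DD e / QQ e ^ 2 - (1 - 1/8 * e)) 2.
Proof.
  assert (HX : bigO0 (fun e => QQ e - aQ e + 3/8 * e^3) 3).
  { apply bO_add. apply (bO_weak _ 4). lia. exact Q_O. apply bO_mon. }
  assert (HW : bigO0 (fun e => QQ e / e^2 - 3/2) 1).
  { apply bO_ext_loc with (g := fun e => (QQ e - aQ e + 3/8 * e^3) / e^2).
    exists 1. split. lra. intros e He. assert (e <> 0) by (intro h; rewrite h, Rabs_R0 in He; lra).
    unfold aQ. field. auto.
    apply (bO_div_pow _ 1 2). exact HX. }
  destruct (bO_pos _ (3/2) HW) as [dW [HdW HWp]]. lra.
  assert (HWi : bigO0 (fun e => / (QQ e / e^2)) 0) by (apply (bO_inv _ (3/2)); auto; lra).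
  apply bO_ext_loc with (g := fun e =>
    ((II e * DD e - QQ e ^ 2 - (- (9/32) * e^5)) + (1/8 * e^1) * ((QQ e - aQ e + 3/8 * e^3) * (QQ e - aQ e + 3/8 * e^3 + 3 * e^2))) / e^4
    * (/ (QQ e / e^2) * / (QQ e / e^2))).
  { exists dW. split; auto. intros e He. specialize (HWp e He).
    assert (e <> 0) by (intro h; rewrite h, Rabs_R0 in He; lra).
    assert (QQ e <> 0).
    { intro h. rewrite h in HWp. unfold Rdiv in HWp. rewrite Rmult_0_l in HWp. lra. }
    unfold aQ. field. auto. }
  apply (bO_mul _ _ 2 0). 2: apply (bO_mul _ _ 0 0); exact HWi.
  apply (bO_div_pow _ 2 4). apply bO_add. exact P_O.
  apply (bO_mul _ _ 1 5). apply bO_mon. apply (bO_mul _ _ 3 2). exact HX.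
  apply bO_add. apply (bO_weak _ 3). lia. exact HX.
  apply (bO_ext _ (fun e => 3 * e^2)). intros; ring. apply bO_mon.
Qed.

Lemma neg_near : exists delta : R, 0 < delta /\
     forall e, 0 < e < delta -> II e * DD e - QQ e ^ 2 < 0.
Proof.
  destruct P_O as [C [d [Hd H]]].
  assert (HC : 0 <= C) by (apply (bO_C_nonneg (fun e => II e * DD e - QQ e ^ 2 - (- (9/32) * e^5)) 6 C d); auto).
  exists (Rmin d (Rmin 1 (9 / (32 * (C + 1))))). split.
  { apply Rmin_glb_lt; auto. apply Rmin_glb_lt. lra. apply Rdiv_lt_0_compat; lra. }
  intros e He.
  assert (He1 : e < d) by (eapply Rlt_le_trans; [apply He| apply Rmin_l]).
  assert (He2 : e < 9 / (32 * (C + 1))).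
  { eapply Rlt_le_trans. apply He. eapply Rle_trans; apply Rmin_r. }
  assert (Habs : Rabs e = e) by (apply Rabs_pos_eq; lra).
  specialize (H e). rewrite Habs in H. specialize (H (conj (proj1 He) He1)).
  apply Rabs_le_between in H. destruct H as [_ H].
  assert (Hce : C * e < 9 / 32).
  { apply Rle_lt_trans with ((C + 1) * e). nra.
    replace (9 / 32) with ((C + 1) * (9 / (32 * (C + 1)))) by (field; lra).
    apply Rmult_lt_compat_l; lra. }
  assert (Hp5 : 0 < e ^ 5) by (apply pow_lt; lra).
  replace (C * e ^ 6) with ((C * e) * e ^ 5) in H by ring.
  assert (C * e * e ^ 5 < 9/32 * e ^ 5) by (apply Rmult_lt_compat_r; auto).
  lra.
Qed.

Theorem proposition3p2 :
  bigO0 (fun e => Ifun (feps e) - (3/2 * e^2 + 3/4 * e^3)) 4 /\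
  bigO0 (fun e => Qfun (feps e) - (3/2 * e^2 + 3/8 * e^3)) 4 /\
  bigO0 (fun e => Dfun (feps e) - (3/2 * e^2 - 3/16 * e^3)) 4 /\
  bigO0 (fun e => Ifun (feps e) * Dfun (feps e) - Qfun (feps e) ^ 2
                  - (- (9/32) * e^5)) 6 /\
  bigO0 (fun e => Ifun (feps e) * Dfun (feps e) / Qfun (feps e) ^ 2
                  - (1 - 1/8 * e)) 2 /\
  (exists delta : R, 0 < delta /\
     forall e, 0 < e < delta ->
       Ifun (feps e) * Dfun (feps e) - Qfun (feps e) ^ 2 < 0).
Proof.
  split. exact I_O. split. exact Q_O. split. exact D_O. split. exact P_O. split. exact R_O.
  exact neg_near.
Qed.
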